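(* Let $\alpha\in[0,1)$, let $n\geq f(\alpha)$, and let $s$ be an integer with $2\leq s\leq\frac{n-2}{3}$. Then $\rho_{\alpha}\big(K_s\vee(K_{n-3s}\cup 2sK_1)\big)<\eta(n)$. (For $s=1$ one has $\rho_{\alpha}(K_1\vee(K_{n-3}\cup 2K_1))=\eta(n)$.)
   Context: For a graph $G$, $A_{\alpha}(G)=\alpha D(G)+(1-\alpha)A(G)$ where $D(G)$ is the diagonal degree matrix and $A(G)$ the adjacency matrix, and $\rho_{\alpha}(G)$ is the largest eigenvalue of $A_{\alpha}(G)$. $\vee$ denotes join, $\cup$ disjoint union, $K_m$ the complete graph on $m$ vertices, $tK_1$ the edgeless graph on $t$ vertices. Define $f(\alpha)=14$ if $\alpha\in[0,\frac12]$, $f(\alpha)=17$ if $\alpha\in(\frac12,\frac23]$, $f(\alpha)=20$ if $\alpha\in(\frac23,\frac34]$, and $f(\alpha)=\frac{5}{1-\alpha}+1$ if $\alpha\in(\frac34,1)$. $\eta(n)$ is the largest root of $x^{3}-((\alpha+1)n+\alpha-4)x^{2}+(\alpha n^{2}+(\alpha^{2}-2\alpha-1)n-2\alpha+1)x-\alpha^{2}n^{2}+(5\alpha^{2}-3\alpha+2)n-10\alpha^{2}+15\alpha-8=0$. *)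

(* Defs.v *)
From HB Require Import structures.
From mathcomp Require Import all_boot all_order all_algebra.
From mathcomp Require Import reals.
Set Implicit Arguments. Unset Strict Implicit. Unset Printing Implicit Defensive.
Import Order.TTheory GRing.Theory Num.Theory.
Local Open Scope ring_scope.

(* A simple graph on a finite vertex type T is a symmetric irreflexive
   relation; the constructions below always produce such relations. *)

Definition complete_graph (m : nat) : rel 'I_m := fun i j => i != j.

Definition edgeless_graph (t : nat) : rel 'I_t := fun _ _ => false.

Definition gunion (T1 T2 : finType) (e1 : rel T1) (e2 : rel T2) : rel (T1 + T2) :=
  fun x y => match x, y with
             | inl a, inl b => e1 a b
             | inr a, inr b => e2 a b
             | _, _ => false
             end.

Definition gjoin (T1 T2 : finType) (e1 : rel T1) (e2 : rel T2) : rel (T1 + T2) :=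
  fun x y => match x, y with
             | inl a, inl b => e1 a b
             | inr a, inr b => e2 a b
             | _, _ => true
             end.

Definition adjmx (R : nzRingType) (T : finType) (e : rel T) : 'M[R]_#|T| :=
  \matrix_(i, j) (e (enum_val i) (enum_val j))%:R.

Definition gdeg (T : finType) (e : rel T) (x : T) : nat := #|[set y | e x y]|.

Definition degmx (R : nzRingType) (T : finType) (e : rel T) : 'M[R]_#|T| :=
  \matrix_(i, j) ((i == j)%:R * (gdeg e (enum_val i))%:R).

Definition Aalpha (R : comNzRingType) (T : finType) (alpha : R) (e : rel T)
  : 'M[R]_#|T| := alpha *: degmx R e + (1 - alpha) *: adjmx R e.

Definition is_largest_eigenvalue (R : numFieldType) (N : nat) (M : 'M[R]_N) (r : R) :=
  eigenvalue M r /\ forall m : R, eigenvalue M m -> m <= r.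

Definition is_rho_alpha (R : numFieldType) (T : finType) (alpha : R) (e : rel T) (r : R) :=
  is_largest_eigenvalue (Aalpha alpha e) r.

Definition is_largest_root (R : numFieldType) (p : {poly R}) (x : R) :=
  root p x /\ forall y : R, root p y -> y <= x.

Definition f_thr (R : numFieldType) (alpha : R) : R :=
  if alpha <= 1/2 then 14
  else if alpha <= 2/3 then 17
  else if alpha <= 3/4 then 20
  else 5 / (1 - alpha) + 1.

Definition eta_poly (R : numFieldType) (alpha : R) (n : nat) : {poly R} :=
  let N := n%:R in
  'X^3
  - ((alpha + 1) * N + alpha - 4)%:P * 'X^2
  + (alpha * N ^+ 2 + (alpha ^+ 2 - 2 * alpha - 1) * N - 2 * alpha + 1)%:P * 'X
  + (- alpha ^+ 2 * N ^+ 2 + (5 * alpha ^+ 2 - 3 * alpha + 2) * N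
     - 10 * alpha ^+ 2 + 15 * alpha - 8)%:P.

Definition Gsn (s n : nat) :=
  gjoin (@complete_graph s) (gunion (@complete_graph (n - 3 * s)%N) (@edgeless_graph (2 * s)%N)).

(* Main.v *)
Require Import Defs.
From HB Require Import structures.
From mathcomp Require Import all_boot all_order all_algebra.
From mathcomp Require Import reals.
From mathcomp Require Import ring lra zify.
Import Order.TTheory GRing.Theory Num.Theory.
Local Open Scope ring_scope.

Lemma poly_id (R : comNzRingType) (alpha b m S K : R) : b = 1 - alpha ->
  (m - alpha*(3*S+1+K) + b - S*b) * (m - alpha*(S+K+1) + b - (K+2)*b) * (m - alpha*S)
   - S*b^+2*((K+2)*(m - alpha*S) + 2*S*(m - alpha*(S+K+1) + b - (K+2)*b)) =
  (4*S^+3*b^+2 + 8*S^+3*b + 4*S^+2*K*b^+2 + 8*S^+2*K*b - 12*S^+2*b - 8*S^+2 + 2*S*K^+2*b - 2*S*K*b^+2 - 8*S*K*b - 4*S*K - 4*S*b^+2 - 2*S*b + 12*S - 2*K^+2*b - 2*K*b + 4*K + 4*b - 4) + (3*S^+2*b^+2 + 12*S^+2*b + 4*S^+2 + S*K*b^+2 + 7*S*K*b + 2*S*K + 2*S*b^+2 - 5*S*b - 14*S + K^+2*b - K*b - 4*K - 6*b + 8) * (m - (3 * S + 2 + K - 3)) + (4*S*b + 4*S + K*b + K + 2*b - 5) * (m - (3 * S + 2 + K - 3))^+2 + (m - (3 * S + 2 + K - 3))^+3.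
Proof. move=> ->; ring. Qed.
Ltac pos := repeat (apply: mulr_ge0); lra.

Lemma C_pos (R : realFieldType) (b s : R) : 0 < b -> b <= 1 -> 2 <= s -> 4 <= b*(3*s+1) ->
  0 < 4*s^+3*b^+2 + 8*s^+3*b - 12*s^+2*b - 8*s^+2 - 4*s*b^+2 - 2*s*b + 12*s + 4*b - 4.
Proof. move=> hb hb1 hs h4.
have h1 : 0 <= (s-2) * (s*b) by pos.
have h2 : 0 <= (s-2) * b by pos.
have h3 : 0 <= s*(b*(3*s+1) - 4) by pos.
have h5 : 0 <= (s*s)*(b*(3*s+1) - 4) by pos.
have h6 : 0 <= (s*s)*(b*(b*(3*s+1) - 4)) by pos.
nra.
Qed.
Lemma H_pos (R : realFieldType) (b s : R) : 0 < b -> b <= 1 -> 2 <= s -> b*(3*s+1) < 4 ->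
  0 < -8*b^+3*s^+3 + 2*b^+3*s^+2 - 2*b^+3*s + 2*b^+2*s^+3 + 14*b^+2*s^+2 - 6*b^+2*s + 4*b^+2 - 12*b*s^+2 + 4*b*s + 16*s - 16.
Proof. move=> hb hb1 hs h4.
set x := b * s.
have hx : 3 * x < 4 - b by rewrite /x; lra.
have hx0 : 0 < x by rewrite /x mulr_gt0 //; lra.
have e : -8*b^+3*s^+3 + 2*b^+3*s^+2 - 2*b^+3*s + 2*b^+2*s^+3 + 14*b^+2*s^+2 - 6*b^+2*s + 4*b^+2 - 12*b*s^+2 + 4*b*s + 16*s - 16
  = -8*x^+3 + 2*b*x^+2 - 2*b^+2*x + 2*x^+2*s + 14*x^+2 - 6*b*x + 4*b^+2 - 12*x*s + 4*x + 16*s - 16.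
  by rewrite /x; ring.
rewrite e.
have h1 : 0 <= (s-2)*((2 - x)*(4 - x)) by pos.
have h2 : 0 <= b*(x*x) by pos.
have h3 : 0 <= b*(4 - b - 3*x) by pos.
have h4' : 0 <= x*(4 - b - 3*x) by pos.
have h5 : 0 <= x*(x*(4 - b - 3*x)) by pos.
have h6 : 0 <= b*(x*(4 - b - 3*x)) by pos.
nra.
Qed.

Lemma c0_pos (R : realFieldType) (b s k : R) : 0 < b -> b <= 1 -> 2 <= s -> 0 <= k ->
  4 <= b*(3*s+1+k) ->
  0 < 4*s^+3*b^+2 + 8*s^+3*b + 4*s^+2*k*b^+2 + 8*s^+2*k*b - 12*s^+2*b - 8*s^+2 + 2*s*k^+2*b - 2*s*k*b^+2 - 8*s*k*b - 4*s*k - 4*s*b^+2 - 2*s*b + 12*s - 2*k^+2*b - 2*k*b + 4*k + 4*b - 4.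
Proof. move=> hb hb1 hs hk h4.
set C := 4*s^+3*b^+2 + 8*s^+3*b - 12*s^+2*b - 8*s^+2 - 4*s*b^+2 - 2*s*b + 12*s + 4*b - 4.
set D := 2*s*(s-2)+2*s*b*(2*s-1).
set E := 4*(s-1)+b*D.
have hD : 0 <= D.
  have : 0 <= s*(s-2) by pos.
  have : 0 <= s*b*(2*s-1) by pos.
  rewrite /D; lra.
have hE : 0 < E.
  have : 0 <= b * D by pos.
  rewrite /E; lra.
have hP : 0 <= (s-1)*(k*(b*(3*s+1+k) - 4)) by pos.
have -> : 4*s^+3*b^+2 + 8*s^+3*b + 4*s^+2*k*b^+2 + 8*s^+2*k*b - 12*s^+2*b - 8*s^+2 + 2*s*k^+2*b - 2*s*k*b^+2 - 8*s*k*b - 4*s*k - 4*s*b^+2 - 2*s*b + 12*s - 2*k^+2*b - 2*k*b + 4*k + 4*b - 4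
  = (k * E + C) + 2 * ((s-1)*(k*(b*(3*s+1+k) - 4))).
  by rewrite /C /E /D; ring.
have [hw|hw] := lerP 4 (b*(3*s+1)).
  have := @C_pos R b s hb hb1 hs hw. have : 0 <= k * E by pos. rewrite /C; lra.
have hH := @H_pos R b s hb hb1 hs hw.
have hQ : 0 <= E * (b*(3*s+1+k) - 4) by pos.
have e2 : b * (k * E + C) = (E * (b*(3*s+1+k) - 4)) + (-8*b^+3*s^+3 + 2*b^+3*s^+2 - 2*b^+3*s + 2*b^+2*s^+3 + 14*b^+2*s^+2 - 6*b^+2*s + 4*b^+2 - 12*b*s^+2 + 4*b*s + 16*s - 16).
  by rewrite /C /E /D; ring.
have : 0 < b * (k * E + C) by rewrite e2; lra.
rewrite pmulr_rgt0 //; lra.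
Qed.
Lemma c1_pos (R : realFieldType) (b s k : R) : 0 < b -> b <= 1 -> 2 <= s -> 0 <= k ->
  12 <= 3*s+k -> 4 <= b*(3*s+1+k) ->
  0 < 3*s^+2*b^+2 + 12*s^+2*b + 4*s^+2 + s*k*b^+2 + 7*s*k*b + 2*s*k + 2*s*b^+2 - 5*s*b - 14*s + k^+2*b - k*b - 4*k - 6*b + 8.
Proof. move=> hb hb1 hs hk h12 h4.
have h1 : 0 <= k * (b*(3*s+1+k) - 4) by pos.
have h2 : 0 <= (s-2) * (k*b) by pos.
have h3 : 0 <= (s-2) * b by pos.
have h4' : 0 <= (s-2) * (s*b) by pos.
have h5 : 0 <= s*(b*(k*b)) by pos.
have h6 : 0 <= b*(s*b) by pos.
have h9 : 0 <= s*(s*(b*b)) by pos.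
have [hs4|hs4] := lerP 4 s.
  have h7 : 0 <= (s-4)*(s-2) by pos.
  have h8 : 0 <= (s-2)*k by pos.
  nra.
have h7 : 0 <= s*(3*s+k-12) by pos.
have h8 : 0 <= (4-s)*(s-2) by pos.
nra.
Qed.
Lemma AalphaE (R : comNzRingType) (T : finType) (alpha : R) (e : rel T) i j :
  Aalpha alpha e i j = alpha * ((i == j)%:R * (gdeg e (enum_val i))%:R) + (1 - alpha) * (e (enum_val i) (enum_val j))%:R.
Proof. rewrite /Aalpha /degmx /adjmx. by rewrite !mxE. Qed.

Lemma eig_fun (R : fieldType) (T : finType) (alpha : R) (e : rel T) (m : R) :
  eigenvalue (Aalpha alpha e) m ->
  exists w : T -> R, (exists x, w x != 0) /\
    forall y, alpha * (gdeg e y)%:R * w y + (1 - alpha) * \sum_x w x * (e x y)%:R = m * w y.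
Proof.
case/eigenvalueP => v hv nz.
exists (fun x => v 0 (enum_rank x)); split.
  apply/existsP; rewrite -negb_forall; apply: contra nz => /forallP H.
  apply/eqP/rowP => j; rewrite !mxE; have := H (enum_val j); rewrite enum_valK => /eqP ->.
  by [].
move=> y; have := congr1 (fun M : 'rV[R]_#|T| => M 0 (enum_rank y)) hv; rewrite !mxE => <-.
rewrite (reindex (@enum_rank T)) /=; last first.
  by exists enum_val => x _; rewrite ?enum_rankK ?enum_valK.
rewrite [RHS](eq_bigr (fun x => v 0 (enum_rank x) * (alpha * ((x==y)%:R * (gdeg e x)%:R)) + v 0 (enum_rank x) * ((1-alpha) * (e x y)%:R))); last first.
  by move=> x _; rewrite AalphaE !enum_rankK (inj_eq enum_rank_inj) mulrDr.
rewrite big_split /= [X in _ = X + _](bigD1 y) //= [X in _ = _ + X + _]big1 ?addr0; last first.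
  by move=> x /negbTE ->; rewrite mul0r mulr0 mulr0.
rewrite mulr_sumr eqxx mul1r.
congr (_ + _); first by rewrite mulrC.
by apply: eq_bigr => x _; ring.
Qed.
Lemma sum_neq (R : nzRingType) (I : finType) (u : I -> R) j :
  \sum_i u i * (i != j)%:R = \sum_i u i - u j.
Proof.
rewrite (bigD1 j) //= eqxx mulr0 add0r [X in _ = X - _](bigD1 j) //= addrC addrK.
by apply: eq_bigr => i ->; rewrite mulr1.
Qed.

Lemma sum_neq' (R : nzRingType) (I : finType) (u : I -> R) j :
  \sum_i u i * (j != i)%:R = \sum_i u i - u j.
Proof. rewrite -sum_neq; apply: eq_bigr => i _; by rewrite eq_sym. Qed.

Lemma sum_m0 (R : nzRingType) (I : finType) (f : I -> R) : \sum_i f i * 0 = 0.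
Proof. by rewrite big1 // => i _; rewrite mulr0. Qed.
Lemma sum_m1 (R : nzRingType) (I : finType) (f : I -> R) : \sum_i f i * 1 = \sum_i f i.
Proof. by apply: eq_bigr => i _; rewrite mulr1. Qed.

Definition TT (s n : nat) := ('I_s + ('I_(n - 3 * s) + 'I_(2 * s)))%type.
Definition SX (R : nzRingType) (s n : nat) (u : TT s n -> R) := \sum_i u (inl i).
Definition SY (R : nzRingType) (s n : nat) (u : TT s n -> R) := \sum_j u (inr (inl j)).
Definition SZ (R : nzRingType) (s n : nat) (u : TT s n -> R) := \sum_k u (inr (inr k)).

Arguments SX {R s n} u.
Arguments SY {R s n} u.
Arguments SZ {R s n} u.

Lemma gsn_sum (R : nzRingType) (s n : nat) (u : TT s n -> R) (y : TT s n) :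
  \sum_x u x * (@Gsn s n x y)%:R =
  match y with
  | inl i => SX u - u (inl i) + SY u + SZ u
  | inr (inl j) => SX u + SY u - u (inr (inl j))
  | inr (inr k) => SX u
  end.
Proof.
rewrite big_sumType /= big_sumType /= /SX /SY /SZ.
case: y => [i|[j|k]] /=; rewrite /complete_graph /edgeless_graph /= ?sum_neq !(sum_m0, sum_m1) ?addr0 //.
- by rewrite addrA.
- by rewrite addrA.
Qed.

Lemma gsn_sym (s n : nat) (x y : TT s n) : @Gsn s n x y = @Gsn s n y x.
Proof.
by case: x => [i|[j|k]]; case: y => [i'|[j'|k']] //=; rewrite /complete_graph eq_sym.
Qed.

Lemma gdeg_R (R : nzRingType) (T : finType) (e : rel T) x : (gdeg e x)%:R = \sum_y (e x y)%:R :> R.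
Proof.
rewrite /gdeg -sum1_card natr_sum big_mkcond /=.
by apply: eq_bigr => y _; rewrite inE; case: (e x y).
Qed.

Lemma c2_pos (R : realFieldType) (b s k : R) : 0 < b -> b <= 1 -> 2 <= s -> 0 <= k ->
  0 < 4*s*b + 4*s + k*b + k + 2*b - 5.
Proof. move=> *; nra. Qed.

Lemma sumr_constR (R : nzRingType) (m : nat) (c : R) : \sum_(i < m) c = c * m%:R.
Proof. by rewrite sumr_const card_ord mulr_natr. Qed.

Lemma eig_bound (R : realType) (alpha : R) (s n : nat) (m : R) :
  0 <= alpha -> alpha < 1 -> (2 <= s)%N -> (3 * s <= n - 2)%N ->
  4 <= (1 - alpha) * (n%:R - 1) -> (14 : R) <= n%:R ->
  eigenvalue (Aalpha alpha (@Gsn s n)) m -> m < n%:R - 3.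
Proof.
move=> ha0 ha1 hs2 hsn hb4 h14 /eig_fun [w [[x0 hx0] H]].
set k := (n - 3 * s - 2)%N.
have hn : n = (3 * s + 2 + k)%N by rewrite /k; lia.
have hp : (n - 3 * s = k + 2)%N by rewrite /k; lia.
set b := 1 - alpha.
set S : R := s%:R. set K : R := k%:R.
have hN : n%:R = 3 * S + 2 + K :> R by rewrite hn natrD natrD natrM.
have hP : (n - 3 * s)%:R = K + 2 :> R by rewrite hp natrD.
have h2s : (2 * s)%:R = 2 * S :> R by rewrite natrM.
have hS2 : 2 <= S by rewrite /S (ler_nat R 2 s).
have hK0 : 0 <= K by rewrite /K.
have hb0 : 0 < b by rewrite /b; lra.
have hb1 : b <= 1 by rewrite /b; lra.
rewrite hN in hb4 h14 *.
have deg (y : TT s n) : (gdeg (@Gsn s n) y)%:R =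
    match y with inl _ => 3*S + 1 + K | inr (inl _) => S + K + 1 | inr (inr _) => S end :> R.
  rewrite gdeg_R.
  rewrite (eq_bigr (fun x => (fun _ => 1 : R) x * (@Gsn s n x y)%:R)); last first.
    by move=> x _; rewrite gsn_sym mul1r.
  rewrite gsn_sum /SX /SY /SZ !sumr_constR !mul1r hP h2s -/S.
  by case: y => [i|[j|k']]; ring.
set X := @SX R s n w. set Y := @SY R s n w. set Z := @SZ R s n w.
have EX (i : 'I_s) : (m - alpha * (3*S+1+K) + b) * w (inl i) = b * (X + Y + Z).
  have := H (inl i); rewrite deg gsn_sum -/X -/Y -/Z -/b => Hi; lra.
have EY (j : 'I_(n - 3 * s)) : (m - alpha * (S+K+1) + b) * w (inr (inl j)) = b * (X + Y).
  have := H (inr (inl j)); rewrite deg gsn_sum -/X -/Y -/Z -/b => Hi; lra.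
have EZ (j : 'I_(2 * s)) : (m - alpha * S) * w (inr (inr j)) = b * X.
  have := H (inr (inr j)); rewrite deg gsn_sum -/X -/Y -/Z -/b => Hi; lra.
rewrite ltNge; apply/negP => hm.
set t := m - (3 * S + 2 + K - 3).
have ht : 0 <= t by rewrite /t; lra.
have hAS : alpha * S <= S by nra.
have hcX : 0 < m - alpha * (3*S+1+K) + b by rewrite /b in hb4 *; lra.
have hcY : 0 < m - alpha * (S+K+1) + b - (K+2)*b by rewrite /b; lra.
have hcY' : 0 < m - alpha * (S+K+1) + b by rewrite /b in hb4 *; nra.
have hcZ : 0 < m - alpha * S by lra.
have sX : (m - alpha * (3*S+1+K) + b) * X = S * (b * (X + Y + Z)).
  by rewrite /X /SX mulr_sumr (eq_bigr _ (fun i _ => EX i)) sumr_constR mulrC.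
have sY : (m - alpha * (S+K+1) + b) * Y = (K + 2) * (b * (X + Y)).
  by rewrite /Y /SY mulr_sumr (eq_bigr _ (fun i _ => EY i)) sumr_constR hP mulrC.
have sZ : (m - alpha * S) * Z = (2 * S) * (b * X).
  by rewrite /Z /SZ mulr_sumr (eq_bigr _ (fun i _ => EZ i)) sumr_constR h2s mulrC.
set cX := m - alpha * (3*S+1+K) + b - S*b.
set cY := m - alpha * (S+K+1) + b - (K+2)*b.
set cZ := m - alpha * S.
have hpoly : 0 < cX*cY*cZ - S*b^+2*((K+2)*cZ + 2*S*cY).
  rewrite /cX /cY /cZ (@poly_id R alpha b m S K erefl) -/t.
  have hb4' : 4 <= b*(3*S+1+K) by move: hb4; rewrite /b; lra.
  have h12 : 12 <= 3*S+K by lra.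
  have h0 := @c0_pos R b S K hb0 hb1 hS2 hK0 hb4'.
  have h1 := @c1_pos R b S K hb0 hb1 hS2 hK0 h12 hb4'.
  have h2 := @c2_pos R b S K hb0 hb1 hS2 hK0.
  have : 0 <= t^+3 by rewrite exprn_ge0.
  have : 0 <= (4*S*b + 4*S + K*b + K + 2*b - 5) * t^+2 by rewrite mulr_ge0 ?exprn_ge0 //; lra.
  have : 0 <= (3*S^+2*b^+2 + 12*S^+2*b + 4*S^+2 + S*K*b^+2 + 7*S*K*b + 2*S*K + 2*S*b^+2 - 5*S*b - 14*S + K^+2*b - K*b - 4*K - 6*b + 8) * t by rewrite mulr_ge0 //; lra.
  lra.
have hX0 : X = 0.
  have e : (cX*cY*cZ - S*b^+2*((K+2)*cZ + 2*S*cY)) * X =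
     cY*cZ*((m - alpha * (3*S+1+K) + b) * X - S * (b * (X + Y + Z)))
     + S*b*cZ*((m - alpha * (S+K+1) + b) * Y - (K + 2) * (b * (X + Y)))
     + S*b*cY*((m - alpha * S) * Z - (2 * S) * (b * X)).
    by rewrite /cX /cY /cZ; ring.
  move: e; rewrite sX sY sZ !subrr !mulr0 !addr0 => /eqP.
  by rewrite mulf_eq0 (gt_eqF hpoly) => /eqP.
have hY0 : Y = 0.
  have : cY * Y = 0 by move: sY; rewrite hX0 /cY; lra.
  by move/eqP; rewrite mulf_eq0 (gt_eqF hcY) => /eqP.
have hZ0 : Z = 0.
  have : cZ * Z = 0 by move: sZ; rewrite hX0 /cZ; lra.
  by move/eqP; rewrite mulf_eq0 (gt_eqF hcZ) => /eqP.
move: hx0; case: x0 => [i|[j|j]].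
- have := EX i; rewrite hX0 hY0 hZ0 !addr0 mulr0 => /eqP.
  by rewrite mulf_eq0 (gt_eqF hcX) /= => ->.
- have := EY j; rewrite hX0 hY0 !addr0 mulr0 => /eqP.
  by rewrite mulf_eq0 (gt_eqF hcY') /= => ->.
- have := EZ j; rewrite hX0 mulr0 => /eqP.
  by rewrite mulf_eq0 (gt_eqF hcZ) /= => ->.
Qed.

Lemma eta_hornerE (R : numFieldType) (alpha x : R) n :
  (eta_poly alpha n).[x] = x^+3 - ((alpha + 1) * n%:R + alpha - 4) * x^+2
  + (alpha * n%:R ^+ 2 + (alpha ^+ 2 - 2 * alpha - 1) * n%:R - 2 * alpha + 1) * x
  + (- alpha ^+ 2 * n%:R ^+ 2 + (5 * alpha ^+ 2 - 3 * alpha + 2) * n%:R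
     - 10 * alpha ^+ 2 + 15 * alpha - 8).
Proof. rewrite /eta_poly !hornerE. ring. Qed.

Theorem mainTheorem4 (R : realType) (alpha : R) (n s : nat) :
  0 <= alpha -> alpha < 1 ->
  f_thr alpha <= n%:R ->
  (2 <= s)%N -> (3 * s <= n - 2)%N ->
  forall rho eta : R,
    is_rho_alpha alpha (@Gsn s n) rho ->
    is_largest_root (eta_poly alpha n) eta ->
    rho < eta.
Proof.
move=> ha0 ha1 hf hs2 hsn rho eta [hrho _] [heta hmax].
set N : R := n%:R.
have [h14 hb4] : (14 : R) <= N /\ 4 <= (1 - alpha) * (N - 1).
  move: hf; rewrite /f_thr.
  case: ifP => h1 hf; first by split; nra.
  case: ifP hf => h2 hf; first by split; nra.
  case: ifP hf => h3 hf; first by split; nra.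
  have h34 : 3/4 < alpha by rewrite ltNge h3.
  have hb : 0 < 1 - alpha by lra.
  have : 5 <= (N - 1) * (1 - alpha) by rewrite -ler_pdivrMr //; lra.
  move=> h5; split; nra.
have hr := @eig_bound R alpha s n rho ha0 ha1 hs2 hsn hb4 h14 hrho.
suff : N - 3 < eta by lra.
set p := eta_poly alpha n.
have hpL : p.[N - 3] < 0.
  rewrite /p eta_hornerE -/N.
  have -> : (N - 3) ^+ 3 - ((alpha + 1) * N + alpha - 4) * (N - 3) ^+ 2 +
    (alpha * N ^+ 2 + (alpha ^+ 2 - 2 * alpha - 1) * N - 2 * alpha + 1) * (N - 3) +
    (- alpha ^+ 2 * N ^+ 2 + (5 * alpha ^+ 2 - 3 * alpha + 2) * N - 10 * alpha ^+ 2 +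
     15 * alpha - 8) = - (2 * ((1 - alpha) * (alpha * (N - 5) + 1))) by ring.
  rewrite oppr_lt0; apply: mulr_gt0 => //; apply: mulr_gt0; first lra.
  have : 0 <= alpha * (N - 5) by apply: mulr_ge0; lra.
  lra.
have hpN : 0 <= p.[N].
  rewrite /p eta_hornerE -/N.
  nra.
have [x /andP[hx1 hx2] hx] := @poly_ivt R p (N - 3) N ltac:(lra) ltac:(apply/andP; split; lra).
have hxe := hmax x hx.
have : x != N - 3 by apply: contraTneq hx => ->; rewrite /root (lt_eqF hpL).
rewrite neq_lt => /orP[]; lra.
Qed.
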